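(* Let $n$ be sufficiently large, let $f\colon\{0,1\}^n\to\{0,1\}$, let $\widetilde{\epsilon}>0$, let $t,r\in[\Lambda]$ with $t\ge r$, and let $H$ be a power of $2$ with $H=O(n/\widetilde{\epsilon}^2)$ and $H2^t\ge\sqrt n$, $H2^r\ge\sqrt n$. Let $I\subseteq[n]$ be nonempty with $|I|\ge H\widetilde{\epsilon}^2/2$, and suppose every $i\in I$ satisfies \[\min\{\mathrm{Score}_i^+,\mathrm{Score}_i^-\}=\min\Big\{\mathrm{Score}^+_{i,t}\cdot\tfrac{2^t}{\sqrt n},\ \mathrm{Score}^-_{i,r}\cdot\tfrac{2^r}{\sqrt n}\Big\}\in\big[1/H,\,2/H\big].\] Let $\alpha=|I|2^t/n$ and $\beta=|I|2^r/n$. Then for each $i\in I$, at least a $1/8$ fraction of the sets $S\in\mathcal{P}_{i,t}$ are informative for the $i$th coordinate.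
   Context: For $x\in\{0,1\}^n$ and $i\in[n]$, $x^{(i)}$ denotes $x$ with its $i$th bit flipped. An edge $(x,x^{(i)})$ of the hypercube is monotone if $f$ strictly increases along it in direction $i$ (from the endpoint with $i$th bit $0$ to the endpoint with $i$th bit $1$), and anti-monotone if $f$ strictly decreases along it; $E_i^+$ and $E_i^-$ denote the monotone and anti-monotone edges in direction $i$. $\textsc{AE-Search}$ is a fixed randomized query procedure that, on input a point $x\in\{0,1\}^n$ and a set $S\subseteq[n]$, outputs either an index in $S$ or nothing. $\Lambda=O(\log n)$ is a fixed positive integer parameter with $2^j\le n$ for all $j\in[\Lambda]$. For $i\in[n]$ and $j\in[\Lambda]$, $\mathcal{P}_{i,j}$ is the family of subsets of $[n]\setminus\{i\}$ of size $2^j-1$. A pair $(x,S)$ with $S\subseteq[n]\setminus\{i\}$ is a good pair for $E_i^+$ (resp. $E_i^-$) if $(x,x^{(i)})$ is a monotone (resp. anti-monotone) edge and $\textsc{AE-Search}(x,S\cup\{i\})$ returns $i$ with probability at least $1/2$. $\mathrm{Good}_i^{\pm}(S)$ is the set of $x$ with $(x,S)$ good for $E_i^\pm$, and $\mathrm{GoodFrac}_i^\pm(S)=|\mathrm{Good}_i^\pm(S)|/2^n$. A point $x$ is $j$-strong for $E_i^\pm$ if $(x,S)$ is good for $E_i^\pm$ for at least $3/4$ of the sets $S\in\mathcal{P}_{i,j}$; $\mathrm{Score}^\pm_{i,j}$ is the fraction of $x\in\{0,1\}^n$ that are $j$-strong for $E_i^\pm$, and $\mathrm{Score}_i^\pm=\max_{j\in[\Lambda]}\mathrm{Score}^\pm_{i,j}\cdot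 2^j/\sqrt n$. A set $S\in\mathcal{P}_{i,t}$ ($i\in I$) is informative for the $i$th coordinate if (1) $\mathrm{GoodFrac}_i^+(S)\ge 0.1\,\widetilde{\epsilon}^2/(\alpha\sqrt n)$, and (2) at least a $0.1$ fraction of the $(2^r-1)$-sized subsets $T\subseteq S$ satisfy $\mathrm{GoodFrac}_i^-(T)\ge 0.1\,\widetilde{\epsilon}^2/(\beta\sqrt n)$. *)

(* Defs.v *)
From HB Require Import structures.
From mathcomp Require Import all_boot all_order all_algebra.
From mathcomp Require Import reals.
Set Implicit Arguments. Unset Strict Implicit. Unset Printing Implicit Defensive.
Import Order.TTheory GRing.Theory Num.Theory.
Local Open Scope ring_scope.

Definition point (n : nat) := {ffun 'I_n -> bool}.

Definition setbit n (x : point n) (i : 'I_n) (b : bool) : point n :=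
  [ffun k => if k == i then b else x k].

(* A randomized procedure AE-Search(x, S) is modelled by its output
   distribution: ae x S o = probability of output o, where o = Some j means
   "outputs index j" and None means "outputs nothing". *)
Definition is_AESearch (R : realType) n
    (ae : point n -> {set 'I_n} -> option 'I_n -> R) : Prop :=
  forall x S,
    (forall o, 0 <= ae x S o) /\ (\sum_(o : option 'I_n) ae x S o = 1) /\
    (forall j, j \notin S -> ae x S (Some j) = 0).

Definition mono_edge n (f : point n -> bool) (pm : bool) (x : point n) (i : 'I_n) : bool :=
  if pm then (~~ f (setbit x i false)) && f (setbit x i true)
  else f (setbit x i false) && ~~ f (setbit x i true).

Definition Pfam n (i : 'I_n) (j : nat) : {set {set 'I_n}} :=
  [set S : {set 'I_n} | (i \notin S) && (#|S| == (2 ^ j).-1)%N].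

Section Defs.
Variables (R : realType) (n : nat) (f : point n -> bool)
          (ae : point n -> {set 'I_n} -> option 'I_n -> R).

Definition good (pm : bool) (i : 'I_n) (x : point n) (S : {set 'I_n}) : bool :=
  [&& i \notin S, mono_edge f pm x i & 1 / 2 <= ae x (i |: S) (Some i)].

Definition GoodFrac pm i (S : {set 'I_n}) : R :=
  #|[set x : point n | good pm i x S]|%:R / (2 ^ n)%:R.

Definition strong pm i (j : nat) (x : point n) : bool :=
  (3 / 4 : R) * #|Pfam i j|%:R <= #|[set S in Pfam i j | good pm i x S]|%:R.

Definition ScoreJ pm i (j : nat) : R :=
  #|[set x : point n | strong pm i j x]|%:R / (2 ^ n)%:R.

Definition Score (Lambda : nat) pm i : R :=
  \big[Num.max/0]_(1 <= j < Lambda.+1) (ScoreJ pm i j * (2 ^ j)%:R / Num.sqrt n%:R).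

Definition informative (eps alpha beta : R) (t r : nat) (i : 'I_n)
    (S : {set 'I_n}) : bool :=
  [&& S \in Pfam i t,
      (1 / 10) * eps ^+ 2 / (alpha * Num.sqrt n%:R) <= GoodFrac true i S &
      (1 / 10 : R) * #|[set T : {set 'I_n} | (T \subset S) && (#|T| == (2 ^ r).-1)%N]|%:R
      <= #|[set T : {set 'I_n} | [&& T \subset S, #|T| == (2 ^ r).-1 &
              (1 / 10) * eps ^+ 2 / (beta * Num.sqrt n%:R) <= GoodFrac false i T]]|%:R].
End Defs.

(* Main.v *)
Require Import Defs.
From HB Require Import structures.
From mathcomp Require Import all_boot all_order all_algebra.
From mathcomp Require Import reals.
From mathcomp Require Import ring lra.
Set Implicit Arguments. Unset Strict Implicit. Unset Printing Implicit Defensive.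
Import Order.TTheory GRing.Theory Num.Theory.

Lemma supcount n (i : 'I_n) (T : {set 'I_n}) k m :
  i \notin T -> #|T| = k -> (k <= m)%N ->
  #|[set S : {set 'I_n} | [&& i \notin S, #|S| == m & T \subset S]]| = 'C(n - k.+1, m - k).
Proof.
move=> iT cT km.
set D := ~: (i |: T).
have cD : #|D| = (n - k.+1)%N.
  have h := cardsC (i |: T); rewrite cardsU1 iT cT add1n in h.
  by rewrite /D -(addKn k.+1 #|~: (i |: T)|) h card_ord.
rewrite -cD -cards_draws.
have -> : [set S : {set 'I_n} | [&& i \notin S, #|S| == m & T \subset S]] =
   (fun A => A :|: T) @: [set A : {set 'I_n} | A \subset D & #|A| == (m - k)%N].
  apply/setP => S; apply/idP/idP.
  - rewrite inE => /and3P [iS /eqP cS TS].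
    apply/imsetP; exists (S :\: T).
      rewrite inE; apply/andP; split.
        apply/subsetP => x; rewrite !inE => /andP [xT xS].
        rewrite negb_or xT andbT; apply/eqP => exi; by rewrite -exi xS in iS.
      by rewrite cardsD cS (setIidPr TS) cT.
    apply/setP => x; rewrite !inE; case xT: (x \in T) => /=.
      by rewrite ?orbT (subsetP TS).
    by rewrite ?orbF ?andbT.
  - case/imsetP => A; rewrite inE => /andP [AD /eqP cA] ->.
    rewrite inE; apply/and3P; split.
    + rewrite in_setU (negbTE iT) orbF; apply/negP => iA.
      by have := subsetP AD i iA; rewrite !inE eqxx.
    + have dis : A :&: T = set0.
        apply/setP => x; rewrite !inE; apply/negP => /andP [xA xT].
        by have := subsetP AD x xA; rewrite !inE xT orbT.
      by rewrite cardsU dis cards0 subn0 cA cT subnK.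
    + exact: subsetUr.
apply: card_in_imset => A B; rewrite !inE => /andP [AD _] /andP [BD _] E.
have dA : (A :|: T) :\: T = A.
  apply/setP => x; rewrite !inE; case xT: (x \in T) => //=; rewrite ?orbF //.
  apply/esym/negP => xA; by have := subsetP AD x xA; rewrite !inE xT orbT.
have dB : (B :|: T) :\: T = B.
  apply/setP => x; rewrite !inE; case xT: (x \in T) => //=; rewrite ?orbF //.
  apply/esym/negP => xA; by have := subsetP BD x xA; rewrite !inE xT orbT.
by rewrite -dA E dB.
Qed.

Lemma card_sumb (T : finType) (P : pred T) : #|[set x | P x]| = \sum_x (P x : nat).
Proof.
rewrite -sum1_card big_mkcond; apply: eq_bigr => x _; rewrite inE; by case: (P x).
Qed.

Lemma dc n (i : 'I_n) k m (G : pred {set 'I_n}) : (k <= m)%N ->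
  \sum_(S in [set S : {set 'I_n} | (i \notin S) && (#|S| == m)])
     #|[set T : {set 'I_n} | [&& T \subset S, #|T| == k & G T]]|
  = 'C(n - k.+1, m - k) * #|[set T : {set 'I_n} | [&& i \notin T, #|T| == k & G T]]|.
Proof.
move=> km.
under eq_bigr => S _ do rewrite card_sumb.
rewrite exchange_big /= card_sumb big_distrr /=; apply: eq_bigr => T _.
case kT: (#|T| == k); last first.
  by rewrite big1 ?andbF ?muln0 // => S _; rewrite ?kT ?andbF.

case GT: (G T); last first.
  by rewrite big1 ?andbF ?muln0 // => S _; rewrite ?kT ?GT ?andbF.
rewrite !andbT.
have -> : \sum_(S in [set S : {set 'I_n} | (i \notin S) && (#|S| == m)]) ((T \subset S) && true : nat)
   = #|[set S : {set 'I_n} | [&& i \notin S, #|S| == m & T \subset S]]|.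
  rewrite card_sumb big_mkcond /=; apply: eq_bigr => S _; rewrite inE andbT.
  by case: (i \notin S); case: (#|S| == m).
case iT: (i \in T) => /=.
  rewrite muln0; apply/eqP; rewrite cards_eq0; apply/eqP/setP => S; rewrite !inE.
  apply/negP => /and3P [iS _ TS]; by rewrite (subsetP TS i iT) in iS.
by rewrite muln1 (@supcount n i T k m) ?iT //; apply/eqP.
Qed.

Local Open Scope ring_scope.

Lemma sum_ind (T : finType) (A B : {set T}) : B \subset A ->
  (\sum_(S in A) (S \in B : nat) = #|B|)%N.
Proof.
move=> BA; rewrite -sum1_card [LHS]big_mkcond [RHS]big_mkcond /=; apply: eq_bigr => S _.
case SB: (S \in B); last by case: (S \in A).
by rewrite (subsetP BA S SB).
Qed.

Lemma stepB (R : realType) n (i : 'I_n) k m (G : pred {set 'I_n}) : (k <= m)%N ->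
  (11/16 : R) * #|[set T : {set 'I_n} | (i \notin T) && (#|T| == k)]|%:R
     <= #|[set T in [set T : {set 'I_n} | (i \notin T) && (#|T| == k)] | G T]|%:R ->
  (47/72 : R) * #|[set S : {set 'I_n} | (i \notin S) && (#|S| == m)]|%:R
    <= #|[set S in [set S : {set 'I_n} | (i \notin S) && (#|S| == m)] |
          (1/10 : R) * #|[set T : {set 'I_n} | (T \subset S) && (#|T| == k)]|%:R
          <= #|[set T : {set 'I_n} | [&& T \subset S, #|T| == k & G T]]|%:R]|%:R.
Proof.
move=> km hQ.
set Pm := [set S : {set 'I_n} | (i \notin S) && (#|S| == m)].
set Qk := [set T : {set 'I_n} | (i \notin T) && (#|T| == k)].
set g := fun S : {set 'I_n} => #|[set T : {set 'I_n} | [&& T \subset S, #|T| == k & G T]]|.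
set A2 := [set S in Pm | _].
set c := 'C(m, k).
set d := 'C(n - k.+1, m - k).
have cpos : (0 < c)%N by rewrite bin_gt0.
have hc : forall S, S \in Pm -> #|[set T : {set 'I_n} | (T \subset S) && (#|T| == k)]| = c.
  move=> S; rewrite inE => /andP [_ /eqP cS]; by rewrite cards_draws cS.
have E1 : (\sum_(S in Pm) g S = d * #|[set T in Qk | G T]|)%N.
  rewrite /g dc //; congr (_ * _)%N; apply: eq_card => T; by rewrite !inE andbA.
have E2 : (#|Pm| * c = d * #|Qk|)%N.
  have := dc i (fun _ => true) km.
  rewrite -/Pm (eq_bigr (fun _ => c)); last first.
    move=> S SP; rewrite -(hc S SP); apply: eq_card => T; by rewrite !inE andbT.
  rewrite sum_nat_const => ->; congr (_ * _)%N; apply: eq_card => T; by rewrite !inE andbT.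
have A2P : A2 \subset Pm by apply/subsetP => S; rewrite inE => /andP [].
have up : (\sum_(S in Pm) (g S)%:R : R) <= #|Pm|%:R * (c%:R / 10) + #|A2|%:R * (9/10 * c%:R).
  rewrite -(sum_ind A2P) natr_sum big_distrl /= -sumr_const big_distrl -big_split /=.
  apply: ler_sum => S SP.
  case SA: (S \in A2) => /=.
    rewrite mul1r; have : (g S <= c)%N.
      rewrite -(hc S SP); apply: subset_leq_card; apply/subsetP => T; rewrite !inE.
      by case/and3P => -> ->.
    rewrite -(ler_nat R) => h; apply: (le_trans h); lra.
  rewrite mul0r addr0; move: SA; rewrite /A2 inE SP /= (hc S SP) => /negbT.
  rewrite -ltNge => /ltW; rewrite -/(g S); lra.
have lo : (11/16 : R) * (#|Pm|%:R * c%:R) <= \sum_(S in Pm) (g S)%:R.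
  rewrite -natr_sum E1 -natrM E2 natrM natrM mulrA [_ * d%:R]mulrC -mulrA.
  apply: ler_wpM2l => //; rewrite mulrC; exact: hQ.
have cR : (0 : R) < c%:R by rewrite ltr0n.
have := le_trans lo up.
move=> h; rewrite -(ler_pM2l cR); nra.
Qed.

Lemma stepA (R : realType) n (f : point n -> bool) (ae : point n -> {set 'I_n} -> option 'I_n -> R)
  pm i j (tau : R) :
  0 < ScoreJ f ae pm i j -> tau <= ScoreJ f ae pm i j / 5 ->
  (11/16 : R) * #|Pfam i j|%:R <= #|[set S in Pfam i j | tau <= GoodFrac f ae pm i S]|%:R.
Proof.
rewrite /ScoreJ => sp ht.
set P := Pfam i j.
set N : R := (2 ^ n)%:R.
have Np : 0 < N by rewrite ltr0n expn_gt0.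
set st := [set x | strong f ae pm i j x].
set s := #|st|.
have spos : (0 : R) < s%:R.
  by move: sp; rewrite pmulr_lgt0 // invr_gt0.
set A := [set S in P | _].
have AP : A \subset P by apply/subsetP => S; rewrite inE => /andP [].
set h := fun S => #|[set x | strong f ae pm i j x && good f ae pm i x S]|.
have E : (\sum_(S in P) h S = \sum_x (strong f ae pm i j x : nat) * #|[set S in P | good f ae pm i x S]|)%N.
  under eq_bigr => S _ do rewrite /h card_sumb.
  rewrite exchange_big /=; apply: eq_bigr => x _.
  case: (strong f ae pm i j x) => /=; last by rewrite mul0n big1.
  rewrite mul1n card_sumb [LHS]big_mkcond /=; apply: eq_bigr => S _.
  by rewrite inE; case: ((i \notin S) && (#|S| == (2 ^ j).-1)).
have lo : s%:R * ((3/4 : R) * #|P|%:R) <= \sum_(S in P) (h S)%:R.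
  rewrite -natr_sum E natr_sum /s card_sumb natr_sum big_distrl /=.
  apply: ler_sum => x _; rewrite natrM.
  case sx: (strong f ae pm i j x) => /=; last by rewrite !mul0r.
  rewrite !mul1r; exact: sx.
have up : (\sum_(S in P) (h S)%:R : R) <= #|P|%:R * (s%:R / 5) + #|A|%:R * (4/5 * s%:R).
  rewrite -(sum_ind AP) natr_sum big_distrl /= -sumr_const big_distrl -big_split /=.
  apply: ler_sum => S SP.
  have h1 : (h S <= s)%N.
    apply: subset_leq_card; apply/subsetP => x; rewrite !inE; by case/andP.
  case SA: (S \in A) => /=.
    rewrite mul1r; move: h1; rewrite -(ler_nat R) => h1; lra.
  rewrite mul0r addr0; move: SA; rewrite /A inE SP /= /GoodFrac => /negbT.
  rewrite -ltNge ltr_pdivrMr // => hlt.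
  have h2 : (h S <= #|[set x | good f ae pm i x S]|)%N.
    apply: subset_leq_card; apply/subsetP => x; rewrite !inE; by case/andP.
  move: h2; rewrite -(ler_nat R) => h2.
  have : tau * N <= s%:R / 5.
    move: ht; rewrite -/N -/st -/s => ht.
    have -> : s%:R / 5 = (s%:R / N / 5) * N by field; rewrite gt_eqF.
    by rewrite ler_pM2r.
  lra.
have := le_trans lo up => hh.
rewrite -(ler_pM2l spos); nra.
Qed.

Lemma thr (R : realType) (e nR s X Hr T2 p : R) : 0 < e -> 0 < s -> s * s = nR ->
  0 < Hr -> 0 < T2 -> Hr * e / 2 <= X -> 1 / Hr <= p * T2 / s ->
  1 / 10 * e / (X * T2 / nR * s) <= p / 5.
Proof.
move=> ep sp <- Hp Tp hX hS.
have Xp : 0 < X by apply: lt_le_trans hX; rewrite divr_gt0 // mulr_gt0.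
have -> : 1 / 10 * e / (X * T2 / (s * s) * s) = e * s / (10 * X * T2).
  by field; rewrite ?gt_eqF.
rewrite ler_pdivrMr; last by rewrite !mulr_gt0.
have hs : s <= p * T2 * Hr.
  move: hS; rewrite ler_pdivrMr // => hS.
  have -> : p * T2 * Hr = (p * T2 / s * Hr) * s by field; rewrite gt_eqF.
  by rewrite -[X in X <= _]mul1r ler_pM2r.
have pT : 0 <= p * T2.
  have : 0 < p * T2 / s by apply: lt_le_trans hS; rewrite divr_gt0.
  rewrite pmulr_lgt0 ?invr_gt0 //; exact: ltW.
have h1 : e * s <= e * (p * T2 * Hr) by rewrite ler_wpM2l // ltW.
have h2 : (Hr * e) * (p * T2) <= (2 * X) * (p * T2).
  by rewrite ler_wpM2r //; lra.
lra.
Qed.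

Unset Implicit Arguments.
Set Strict Implicit.

Theorem mainTheorem1 (R : realType) (C : R) (hC : 0 < C) :
  exists N : nat, forall (n : nat), (N <= n)%N ->
  forall (f : point n -> bool) (ae : point n -> {set 'I_n} -> option 'I_n -> R)
         (Lambda : nat) (eps : R) (t r H : nat) (I : {set 'I_n}),
  is_AESearch ae ->
  (0 < Lambda)%N ->
  (forall j, (1 <= j <= Lambda)%N -> (2 ^ j <= n)%N) ->
  0 < eps ->
  (1 <= r)%N -> (r <= t)%N -> (t <= Lambda)%N ->
  (exists k, H = (2 ^ k)%N) ->
  H%:R <= C * n%:R / eps ^+ 2 ->
  Num.sqrt (n%:R : R) <= (H * 2 ^ t)%:R ->
  Num.sqrt (n%:R : R) <= (H * 2 ^ r)%:R ->
  I != set0 ->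
  H%:R * eps ^+ 2 / 2 <= #|I|%:R ->
  (forall i, i \in I ->
     Num.min (Score f ae Lambda true i) (Score f ae Lambda false i)
       = Num.min (ScoreJ f ae true i t * (2 ^ t)%:R / Num.sqrt n%:R)
                 (ScoreJ f ae false i r * (2 ^ r)%:R / Num.sqrt n%:R)
     /\ 1 / H%:R <= Num.min (Score f ae Lambda true i) (Score f ae Lambda false i)
     /\ Num.min (Score f ae Lambda true i) (Score f ae Lambda false i) <= 2 / H%:R) ->
  let alpha : R := (#|I| * 2 ^ t)%:R / n%:R in
  let beta : R := (#|I| * 2 ^ r)%:R / n%:R in
  forall i, i \in I ->
    (1 / 8 : R) * #|Pfam i t|%:R
      <= #|[set S in Pfam i t | informative f ae eps alpha beta t r i S]|%:R.
Proof.
exists 0%N => n _ f ae Lambda eps t r H I _ _ _ ep _ rt _ [kH eH] _ _ _ _ hI hsc alpha beta i iI.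
have [e1 [e2 _]] := hsc i iI.
move: e2; rewrite e1 le_min => /andP [hT hR].
have np : (0 < n)%N by case: i {iI e1 hT hR} => j /= /(leq_ltn_trans (leq0n j)).
have sp : 0 < Num.sqrt (n%:R : R) by rewrite sqrtr_gt0 ltr0n.
have ss : Num.sqrt (n%:R : R) * Num.sqrt n%:R = n%:R by rewrite -expr2 sqr_sqrtr // ler0n.
have Hp : (0 : R) < H%:R by rewrite eH ltr0n expn_gt0.
have e2p : 0 < eps ^+ 2 by rewrite exprn_gt0.
have pT : 0 < ScoreJ f ae true i t.
  have : 0 < ScoreJ f ae true i t * (2 ^ t)%:R / Num.sqrt n%:R.
    by apply: lt_le_trans hT; rewrite divr_gt0.
  by rewrite pmulr_lgt0 ?invr_gt0 // pmulr_lgt0 // ltr0n expn_gt0.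
have pR : 0 < ScoreJ f ae false i r.
  have : 0 < ScoreJ f ae false i r * (2 ^ r)%:R / Num.sqrt n%:R.
    by apply: lt_le_trans hR; rewrite divr_gt0.
  by rewrite pmulr_lgt0 ?invr_gt0 // pmulr_lgt0 // ltr0n expn_gt0.
set tau1 := 1 / 10 * eps ^+ 2 / (alpha * Num.sqrt n%:R).
set tau2 := 1 / 10 * eps ^+ 2 / (beta * Num.sqrt n%:R).
have t1 : tau1 <= ScoreJ f ae true i t / 5.
  have h2t : (0:R) < (2 ^ t)%:R by rewrite ltr0n expn_gt0.
  rewrite /tau1 /alpha natrM; apply: (thr (Hr := H%:R)) => //.
have t2 : tau2 <= ScoreJ f ae false i r / 5.
  have h2r : (0:R) < (2 ^ r)%:R by rewrite ltr0n expn_gt0.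
  rewrite /tau2 /beta natrM; apply: (thr (Hr := H%:R)) => //.
have hA := stepA pT t1.
have hB0 := stepA pR t2.
have km : ((2 ^ r).-1 <= (2 ^ t).-1)%N by rewrite -!subn1 leq_sub2r // leq_pexp2l.
have hB := stepB (G := fun T => tau2 <= GoodFrac f ae false i T) km hB0.
set A := [set S in Pfam i t | tau1 <= GoodFrac f ae true i S] in hA.
set A2 := [set S in _ | _] in hB.
have -> : [set S in Pfam i t | informative f ae eps alpha beta t r i S] = A :&: A2.
  apply/setP => S; rewrite /informative !inE.
  case: (i \notin S); case: (#|S| == (2 ^ t).-1) => /=; rewrite ?andbT ?andbF //.
have hU := cardsUI A A2.
have hUP : (#|A :|: A2| <= #|Pfam i t|)%N.
  apply: subset_leq_card; apply/subsetP => S; rewrite !inE; case/orP; by case/andP.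
move: hU hUP; rewrite -(ler_nat R) => /(congr1 (fun x => x%:R : R)).
rewrite !natrD => hU hUP.
have : 0 <= (#|Pfam i t|%:R : R) by rewrite ler0n.
lra.
Qed.
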